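(* Let $(X,\mathcal{R})$ be an association scheme with rank $d+1\geq 4$, and let $\Gamma$ be the connected scheme graph of a relation $R_1\in\mathcal{R}$. Let $x,z\in X$ with $(x,z)\in R_a$ for some relation $R_a$ and $\mathrm{dist}_\Gamma(x,z)=i\geq 2$. Assume there exist two distinct neighbors $z_3,z_4$ of $z$ in $\Gamma$ and two distinct relations $R_b,R_c\in\mathcal{R}$ such that $(x,z_3)\in R_b$, $(x,z_4)\in R_c$, $\mathrm{dist}_\Gamma(x,z_3)=\mathrm{dist}_\Gamma(x,z_4)=i+1$, and $c_{i+1}(x,z_3)=1$. Then there exists a relation $R_e\in\mathcal{R}$ such that $p^1_{be}\neq 0$, $p^1_{ce}\neq 0$, and no pair in $R_e$ is at distance $i$ in $\Gamma$.
   Context: A (symmetric) association scheme with rank $d+1$ on a finite set $X$ is a partition $\mathcal{R}=\{R_0,\dots,R_d\}$ of $X\times X$ with $R_0$ the diagonal, each $R_i$ symmetric, and numbers $p^h_{ij}$ such that for every $(x,y)\in R_h$ the number of $z$ with $(x,z)\in R_i$, $(z,y)\in R_j$ equals $p^h_{ij}$. The scheme graph of $R_1$ is the graph on $X$ with $x\sim y$ iff $(x,y)\in R_1$. For vertices $x,y$ at distance $j$ in $\Gamma$, $c_j(x,y)$ denotes the number of neighbors of $y$ at distance $j-1$ from $x$. *)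

(* Defs.v *)
From mathcomp Require Import all_boot.
Set Implicit Arguments. Unset Strict Implicit. Unset Printing Implicit Defensive.

(* A symmetric association scheme of rank d+1 on a finite set X:
   R x y = i  means (x,y) \in R_i; p h i j are the intersection numbers p^h_{ij}. *)
Definition is_assoc_scheme (X : finType) (d : nat) (R : X -> X -> 'I_d.+1)
    (p : 'I_d.+1 -> 'I_d.+1 -> 'I_d.+1 -> nat) : Prop :=
  [/\ (forall x y, R x y = ord0 <-> x = y),
      (forall x y, R x y = R y x),
      (forall i : 'I_d.+1, exists x y, R x y = i)
    & (forall (h i j : 'I_d.+1) x y, R x y = h ->
         #|[set z | (R x z == i) && (R z y == j)]| = p h i j)].

Definition sadj (X : finType) (d : nat) (R : X -> X -> 'I_d.+1) (r1 : 'I_d.+1) : rel X :=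
  fun x y => R x y == r1.

Fixpoint reach (X : finType) (g : rel X) (k : nat) (x y : X) : bool :=
  if k is k'.+1 then reach g k' x y || [exists w, reach g k' x w && g w y]
  else x == y.

(* Graph distance: least k with a walk of length <= k (for connected graphs
   on X this is < #|X|; value #|X|.+1 if y is unreachable). *)
Definition gdist (X : finType) (g : rel X) (x y : X) : nat :=
  find (fun k => reach g k x y) (iota 0 #|X|.+1).

Definition gconnected (X : finType) (g : rel X) : Prop :=
  forall x y : X, connect g x y.

Definition cnum (X : finType) (g : rel X) (j : nat) (x y : X) : nat :=
  #|[set w | g y w & gdist g x w == j.-1]|.

(* Main.v *)
Require Import Defs.
From mathcomp Require Import all_boot.
Set Implicit Arguments. Unset Strict Implicit. Unset Printing Implicit Defensive.

Lemma inv_pred (X : finType) (d : nat) (R : X -> X -> 'I_d.+1) (Q : X -> X -> bool) :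
  (forall u v u' v', R u v = R u' v' -> Q u v = Q u' v') ->
  forall u v, Q u v = [exists a, exists b, (R a b == R u v) && Q a b].
Proof.
move=> HQ u v; apply/idP/existsP.
  by move=> q; exists u; apply/existsP; exists v; rewrite eqxx.
by case=> a /existsP [b /andP [/eqP e q]]; rewrite -(HQ _ _ _ _ e).
Qed.

Lemma cnt_key (X : finType) (d : nat) (R : X -> X -> 'I_d.+1)
    (p : 'I_d.+1 -> 'I_d.+1 -> 'I_d.+1 -> nat) (r : 'I_d.+1) (P : pred 'I_d.+1) :
  is_assoc_scheme R p -> forall u v,
  #|[set w | (R w v == r) && P (R u w)]| = \sum_(h | P h) p (R u v) h r.
Proof.
case=> _ _ _ Hp u v.
rewrite -sum1_card (partition_big (fun w => R u w) P); last first.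
  by move=> w; rewrite inE => /andP [].
apply: eq_bigr => h Ph.
rewrite -(Hp (R u v) h r u v erefl) -sum1_card.
apply: eq_bigl => w; rewrite !inE.
case: (eqVneq (R u w) h) => [->|]; first by rewrite Ph andbT andbC.
by rewrite !andbF.
Qed.

Lemma cnt_inv (X : finType) (d : nat) (R : X -> X -> 'I_d.+1)
    (p : 'I_d.+1 -> 'I_d.+1 -> 'I_d.+1 -> nat) (r : 'I_d.+1) (P : pred 'I_d.+1) :
  is_assoc_scheme R p -> forall u v u' v', R u v = R u' v' ->
  #|[set w | (R w v == r) && P (R u w)]| = #|[set w | (R w v' == r) && P (R u' w)]|.
Proof.
by move=> Hs u v u' v' e; rewrite !(cnt_key r P Hs) e.
Qed.

Lemma reach_inv (X : finType) (d : nat) (R : X -> X -> 'I_d.+1)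
    (p : 'I_d.+1 -> 'I_d.+1 -> 'I_d.+1 -> nat) (r1 : 'I_d.+1) :
  is_assoc_scheme R p -> forall k u v u' v', R u v = R u' v' ->
  reach (sadj R r1) k u v = reach (sadj R r1) k u' v'.
Proof.
move=> Hs; have [H0 Hsym _ _] := Hs.
elim=> [|k IH] u v u' v' e /=.
  apply/eqP/eqP => [E|E].
    by apply/H0; rewrite -e; apply/H0.
  by apply/H0; rewrite e; apply/H0.
rewrite (IH u v u' v' e); congr orb.
have ex: forall a b, [exists w, reach (sadj R r1) k a w && sadj R r1 w b] =
   (0 < #|[set w | (R w b == r1) &&
      [exists a0, exists b0, (R a0 b0 == R a w) && reach (sadj R r1) k a0 b0]]|).
  move=> a b; apply/existsP/card_gt0P => [[w /andP [rw aw]]|[w]].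
    exists w; rewrite inE; apply/andP; split; first exact: aw.
    by rewrite -(inv_pred IH).
  rewrite inE => /andP [aw rw]; exists w; apply/andP; split; last exact: aw.
  by rewrite (inv_pred IH).
by rewrite !ex (cnt_inv r1 (fun h => [exists a0, exists b0, (R a0 b0 == h) && reach (sadj R r1) k a0 b0]) Hs e).
Qed.

Lemma gdist_inv (X : finType) (d : nat) (R : X -> X -> 'I_d.+1)
    (p : 'I_d.+1 -> 'I_d.+1 -> 'I_d.+1 -> nat) (r1 : 'I_d.+1) :
  is_assoc_scheme R p -> forall u v u' v', R u v = R u' v' ->
  gdist (sadj R r1) u v = gdist (sadj R r1) u' v'.
Proof.
move=> Hs u v u' v' e; rewrite /gdist; apply: eq_find => k; exact: (reach_inv r1 Hs k e).
Qed.

Lemma cnum_inv (X : finType) (d : nat) (R : X -> X -> 'I_d.+1)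
    (p : 'I_d.+1 -> 'I_d.+1 -> 'I_d.+1 -> nat) (r1 : 'I_d.+1) :
  is_assoc_scheme R p -> forall j u v u' v', R u v = R u' v' ->
  cnum (sadj R r1) j u v = cnum (sadj R r1) j u' v'.
Proof.
move=> Hs j u v u' v' e; have [_ Hsym _ _] := Hs.
set P := fun h => [exists a0, exists b0, (R a0 b0 == h) && (gdist (sadj R r1) a0 b0 == j.-1)].
have E: forall a b, cnum (sadj R r1) j a b = #|[set w | (R w b == r1) && P (R a w)]|.
  move=> a b; rewrite /cnum; apply: eq_card => w; rewrite !inE /sadj (Hsym b w).
  congr andb; rewrite /P -(inv_pred (Q := fun a0 b0 => gdist (sadj R r1) a0 b0 == j.-1)) //.
  by move=> ? ? ? ? ee; rewrite (gdist_inv r1 Hs ee).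
by rewrite !E (cnt_inv r1 P Hs e).
Qed.

Lemma gdist_reach (X : finType) (g : rel X) u v :
  gdist g u v <= #|X| -> reach g (gdist g u v) u v.
Proof.
move=> H.
have hs : has (fun k => reach g k u v) (iota 0 #|X|.+1) by rewrite has_find size_iota.
have := nth_find 0 hs; rewrite nth_iota ?add0n //.
Qed.

Lemma gdist_size (X : finType) (g : rel X) u v : gdist g u v <= #|X|.+1.
Proof. by have := find_size (fun k => reach g k u v) (iota 0 #|X|.+1); rewrite size_iota. Qed.

Lemma gdist_min (X : finType) (g : rel X) u v j :
  j < gdist g u v -> reach g j u v = false.
Proof.
move=> H; have := before_find 0 H; rewrite nth_iota //.
by apply: leq_trans H (gdist_size g u v).
Qed.

Lemma gdist_le (X : finType) (g : rel X) u v k :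
  reach g k u v -> k <= #|X| -> gdist g u v <= k.
Proof.
move=> rk kN; rewrite leqNgt; apply/negP => lt.
by rewrite (gdist_min lt) in rk.
Qed.

Lemma reach_step (X : finType) (g : rel X) k u w v :
  reach g k u w -> g w v -> reach g k.+1 u v.
Proof. by move=> rk gw /=; apply/orP; right; apply/existsP; exists w; rewrite rk gw. Qed.

Lemma pos_of_mem (T : finType) (A : {set T}) x n : x \in A -> #|A| = n -> n <> 0.
Proof. move=> xA <- H; have: 0 < #|A| by apply/card_gt0P; exists x. by rewrite H. Qed.

Lemma le1_eq (T : finType) (A : {set T}) w w' : #|A| <= 1 -> w \in A -> w' \in A -> w = w'.
Proof. move/card_le1_eqP => H wA w'A; exact: (H _ _ w'A wA). Qed.

Theorem lemma2p4 (X : finType) (d : nat) (R : X -> X -> 'I_d.+1)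
    (p : 'I_d.+1 -> 'I_d.+1 -> 'I_d.+1 -> nat) (r1 : 'I_d.+1) :
  4 <= d.+1 ->
  is_assoc_scheme R p ->
  gconnected (sadj R r1) ->
  forall (x z : X) (a : 'I_d.+1) (i : nat),
  R x z = a ->
  gdist (sadj R r1) x z = i -> 2 <= i ->
  forall (z3 z4 : X) (b c : 'I_d.+1),
  z3 != z4 -> sadj R r1 z z3 -> sadj R r1 z z4 ->
  b != c -> R x z3 = b -> R x z4 = c ->
  gdist (sadj R r1) x z3 = i.+1 -> gdist (sadj R r1) x z4 = i.+1 ->
  cnum (sadj R r1) i.+1 x z3 = 1 ->
  exists e : 'I_d.+1,
    [/\ p r1 b e <> 0, p r1 c e <> 0 &
        forall u v : X, R u v = e -> gdist (sadj R r1) u v <> i].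
Proof.
move=> _ Hs _ x z a i Hxz Hdxz Hi z3 z4 b c _ Hzz3 Hzz4 _ Hxz3 Hxz4 Hd3 Hd4 Hc.
have [H0 Hsym _ Hp] := Hs.
set g := sadj R r1 in Hdxz Hzz3 Hzz4 Hd3 Hd4 Hc *.
have gE : forall u v, g u v = (R u v == r1) by [].
have ginv := gdist_inv r1 Hs.
have iN : i <= #|X| by have := gdist_size g x z3; rewrite Hd3.
case: i Hdxz Hi Hd3 Hd4 Hc iN => [|i'] // Hdxz Hi Hd3 Hd4 Hc iN.
have i'N : i' <= #|X| by apply: ltnW.
have U1 : forall w, R z3 w = r1 -> gdist g x w = i'.+1 -> w = z.
  move=> w Rw Dw.
  have: #|[set w | g z3 w & gdist g x w == i'.+1]| <= 1 by rewrite -[X in _ <= X]Hc.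
  move/le1_eq; apply; rewrite inE gE ?Rw ?Dw ?eqxx //.
  by rewrite Hsym -gE Hzz3 Hdxz eqxx.
have Hc' : cnum g i'.+2 z3 x = 1 by rewrite -Hc; apply: (cnum_inv r1 Hs); rewrite Hsym.
have U2 : forall w w', R x w = r1 -> gdist g z3 w = i'.+1 ->
                      R x w' = r1 -> gdist g z3 w' = i'.+1 -> w = w'.
  move=> w w' R1 D1 R2 D2.
  have: #|[set w | g x w & gdist g z3 w == i'.+1]| <= 1 by rewrite -[X in _ <= X]Hc'.
  by move/le1_eq; apply; rewrite inE gE ?R1 ?D1 ?R2 ?D2 ?eqxx.
have Dzx : gdist g z x = i'.+1 by rewrite -Hdxz; apply: ginv; rewrite Hsym.
have [y1 Ry1 Dy1] : exists2 y1, R y1 x = r1 & gdist g z y1 = i'.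
  have := gdist_reach (g:=g) (u:=z) (v:=x); rewrite Dzx => /(_ iN) /=.
  rewrite (gdist_min (j:=i')) ?Dzx //= => /existsP [w /andP [rw gw]].
  exists w; first by apply/eqP.
  apply/eqP; rewrite eqn_leq (gdist_le rw i'N) /=.
  rewrite leqNgt; apply/negP => lt.
  have rk := gdist_reach (leq_trans (ltnW lt) i'N).
  have := reach_step rk gw.
  by rewrite gdist_min // Dzx ltnS.
have Dy1z3 : gdist g z3 y1 = i'.+1.
  apply/eqP; rewrite eqn_leq; apply/andP; split.
    have -> : gdist g z3 y1 = gdist g y1 z3 by apply: ginv; rewrite Hsym.
    apply: gdist_le iN; apply: (reach_step (w:=z)) Hzz3.
    have E : gdist g y1 z = i' by rewrite -Dy1; apply: ginv; rewrite Hsym.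
    by rewrite -{1}E; apply: gdist_reach; rewrite E.
  rewrite leqNgt; apply/negP => lt.
  have rk := gdist_reach (leq_trans (ltnW lt) iN).
  have := reach_step rk (v:=x); rewrite gE Ry1 eqxx => /(_ isT) H.
  have D3 : gdist g z3 x = i'.+2 by rewrite -Hd3; apply: ginv; rewrite Hsym.
  by rewrite gdist_min ?D3 ?ltnS in H.
have [v Rz3v Rvx] : exists2 v, R z3 v = a & R v x = r1.
  have pos : p b a r1 <> 0.
    refine (@pos_of_mem _ _ z _ _ (Hp b a r1 x z3 Hxz3)).
    by rewrite inE Hxz eqxx; exact: Hzz3.
  have : 0 < #|[set w | (R z3 w == a) && (R w x == r1)]|.
    by rewrite (Hp b a r1 z3 x) ?lt0n; [apply/eqP | rewrite Hsym].
  by move/card_gt0P => [w]; rewrite inE => /andP [/eqP ? /eqP ?]; exists w.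
have Dz3v : gdist g z3 v = i'.+1 by rewrite -Hdxz; apply: ginv; rewrite Rz3v.
have vy1 : v = y1 by apply: U2; [by rewrite Hsym | done | by rewrite Hsym | done].
subst y1.
have [u Rvu Ruz3] : exists2 u, R v u = c & R u z3 = r1.
  have pos : p a c r1 <> 0.
    refine (@pos_of_mem _ _ z4 _ _ (Hp a c r1 x z Hxz)).
    by rewrite inE Hxz4 eqxx /= Hsym; exact: Hzz4.
  have : 0 < #|[set w | (R v w == c) && (R w z3 == r1)]|.
    by rewrite (Hp a c r1 v z3) ?lt0n; [apply/eqP | rewrite Hsym].
  by move/card_gt0P => [w]; rewrite inE => /andP [/eqP ? /eqP ?]; exists w.
have uz : u != z.
  apply/eqP => uz; subst u.
  have : gdist g v z = gdist g x z4 by apply: ginv; rewrite Rvu.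
  have -> : gdist g v z = gdist g z v by apply: ginv; rewrite Hsym.
  by rewrite Dy1 Hd4 => /eqP; rewrite -[i'.+2]addn2 -{1}[i']addn0 eqn_add2l.
exists (R x u); split.
- apply: (@pos_of_mem _ _ x _ _ (Hp r1 b (R x u) z3 u _)); last by rewrite Hsym.
  by rewrite inE Hsym Hxz3 !eqxx.
- apply: (@pos_of_mem _ _ u _ _ (Hp r1 c (R x u) v x Rvx)).
  by rewrite inE Rvu Hsym !eqxx.
- move=> u0 v0 e0; rewrite (ginv u0 v0 x u e0) => D.
  by move/eqP: uz; apply; apply: U1; [by rewrite Hsym | exact: D].
Qed.
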